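(* Let $h>0$, $r_0>0$, $a_1>|a_2|$, and let $A,B,c_0,C_0$ be as in the context. Fix $\rho_0>0$ and $\beta\in\big(0,\frac{h^2+h\sqrt{h^2+r_0^2}}{r_0^2+h^2+h\sqrt{h^2+r_0^2}}\big)$ (note this ratio equals $c_0/C_0$). For $n\in\mathbb N$ let $P_1^0,P_2^0\in\mathbb R^2$ (possibly depending on $n$) satisfy $|P_1^0-P_2^0|=4\rho_0/n$, put $\rho=\beta\rho_0/n$, let $x(t)$ be the solution of $\dot x=\nabla^\perp\mathcal H(x)$ with $x(0)=DT(x_0)(P_1^0-P_2^0)$, let $E=\mathcal H(x(0))$, and $C_E=\exp\big(\frac{2E}{(a_1+a_2)A}\big)$. Then for every $k\in\mathbb N$ there exists $N_0$ such that for all $n>N_0$: $C_E<C^*$, the solution $x(t)$ is periodic with some period $T_E>0$, and with $T=(k+1)T_E$, $$\min_{t\in[0,T]}|DT(x_0)^{-1}x(t)|\ \ge\ 4\rho.$$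
   Context: Let $g(s)=\frac{1}{2(h\sqrt{s+h^2}+h^2)}$, $\tau(s)=\exp(\int_0^sg(z)dz)$, $T(x)=\tau(|x|^2)x$ for $x\in\mathbb R^2$, $x_0=(r_0,0)$, so $DT(x_0)=\tau(r_0^2)\,\mathrm{diag}\big(1+\frac{r_0^2}{h^2+h\sqrt{h^2+r_0^2}},\,1\big)$. Let $c_0=\tau(r_0^2)$ and $C_0=\tau(r_0^2)\big(1+\frac{r_0^2}{h^2+h\sqrt{h^2+r_0^2}}\big)$. Let $A=\frac{\sqrt{h^2+r_0^2}\,(r_0^2+h^2+h\sqrt{h^2+r_0^2})}{2\pi h\,(h^2+h\sqrt{h^2+r_0^2})}$ and $B=\frac{\tau(r_0^2)r_0}{4\pi h\sqrt{h^2+r_0^2}}$. For two points $\tilde P_1,\tilde P_2$ solving $\dot{\tilde P}_1=Aa_2\frac{(\tilde P_1-\tilde P_2)^\perp}{|\tilde P_1-\tilde P_2|^2}-a_1B(0,1)^T$, $\dot{\tilde P}_2=Aa_1\frac{(\tilde P_2-\tilde P_1)^\perp}{|\tilde P_1-\tilde P_2|^2}-a_2B(0,1)^T$ (with $a^\perp=(-a_2,a_1)$), the difference $x=\tilde P_1-\tilde P_2$ solves the Hamiltonian system $\dot x=\nabla^\perp\mathcal H(x)$ with $\mathcal H(x)=(a_1+a_2)A\ln|x|-(a_1-a_2)Bx_1$, $x=(x_1,x_2)$. Let $a'=\frac{(a_1+a_2)A}{2(a_1-a_2)B}$, so $\mathcal H$ has a unique critical point $x^*=(2a',0)$, and $C^*=(2a'/e)^2$.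 The relation $P_1(t)-P_2(t)=DT(x_0)^{-1}x(t)$ holds. *)

(* Defs.v *)
From Stdlib Require Import Reals Lra.
From Coquelicot Require Import Coquelicot.
Open Scope R_scope.

Definition g_fun (h s : R) : R := / (2 * (h * sqrt (s + h ^ 2) + h ^ 2)).

Definition tau (h s : R) : R := exp (RInt (g_fun h) 0 s).

Definition c0 (h r0 : R) : R := tau h (r0 ^ 2).
Definition C0 (h r0 : R) : R :=
  tau h (r0 ^ 2) * (1 + r0 ^ 2 / (h ^ 2 + h * sqrt (h ^ 2 + r0 ^ 2))).

Definition A_const (h r0 : R) : R :=
  sqrt (h ^ 2 + r0 ^ 2) * (r0 ^ 2 + h ^ 2 + h * sqrt (h ^ 2 + r0 ^ 2))
  / (2 * PI * h * (h ^ 2 + h * sqrt (h ^ 2 + r0 ^ 2))).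

Definition B_const (h r0 : R) : R :=
  tau h (r0 ^ 2) * r0 / (4 * PI * h * sqrt (h ^ 2 + r0 ^ 2)).

Definition norm2 (x : R * R) : R := sqrt (fst x ^ 2 + snd x ^ 2).

Definition Ham (h r0 a1 a2 : R) (x : R * R) : R :=
  (a1 + a2) * A_const h r0 * ln (norm2 x) - (a1 - a2) * B_const h r0 * fst x.

(* x' = grad^perp H(x) = (- d2 H, d1 H), with d1 H = (a1+a2)A x1/|x|^2 - (a1-a2)B,
   d2 H = (a1+a2)A x2/|x|^2.  A solution on the whole real line avoiding 0. *)
Definition is_ham_solution (h r0 a1 a2 : R) (x : R -> R * R) : Prop :=
  forall t : R,
    x t <> (0, 0) /\
    is_derive (fun s => fst (x s)) t
      (- ((a1 + a2) * A_const h r0 * snd (x t) / (norm2 (x t)) ^ 2)) /\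
    is_derive (fun s => snd (x s)) t
      ((a1 + a2) * A_const h r0 * fst (x t) / (norm2 (x t)) ^ 2
       - (a1 - a2) * B_const h r0).

Definition a_prime (h r0 a1 a2 : R) : R :=
  (a1 + a2) * A_const h r0 / (2 * (a1 - a2) * B_const h r0).
Definition C_star (h r0 a1 a2 : R) : R := (2 * a_prime h r0 a1 a2 / exp 1) ^ 2.

Definition DT0 (h r0 : R) (v : R * R) : R * R := (C0 h r0 * fst v, c0 h r0 * snd v).
Definition DT0inv (h r0 : R) (v : R * R) : R * R := (fst v / C0 h r0, snd v / c0 h r0).

(* Main.v *)
Require Import Defs.
From Stdlib Require Import Reals Lra Psatz Lia ClassicalEpsilon Ranalysis5.
From Coquelicot Require Import Coquelicot.
Open Scope R_scope.

Lemma is_derive_cont_pt f x l : is_derive f x l -> continuity_pt f x.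
Proof.
  intros H. apply is_derive_Reals in H.
  apply derivable_continuous_pt. exists l. exact H.
Qed.

Lemma mvt_all f df a b : (forall x, is_derive f x (df x)) ->
  exists c, Rmin a b <= c <= Rmax a b /\ f b - f a = df c * (b - a).
Proof.
  intros H. apply MVT_gen; intros; [apply H| eapply is_derive_cont_pt; apply H].
Qed.

Lemma deriv_nonpos_decr f df : (forall x, is_derive f x (df x)) ->
  (forall x, df x <= 0) -> forall a b, a <= b -> f b <= f a.
Proof.
  intros H Hn a b Hab. destruct (mvt_all f df a b H) as [c [_ Hc]].
  specialize (Hn c). nra.
Qed.

Lemma deriv0_const f : (forall x, is_derive f x 0) -> forall a b, f b = f a.
Proof.
  intros H a b. destruct (mvt_all f (fun _ => 0) a b H) as [c [_ Hc]]. lra.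
Qed.

Lemma is_derive_eq (f : R -> R) (x l l' : R) : is_derive f x l -> l = l' -> is_derive f x l'.
Proof. intros H ->; exact H. Qed.

Lemma is_derive_mul (f g : R -> R) x a b : is_derive f x a -> is_derive g x b ->
  is_derive (fun s => f s * g s) x (a * g x + f x * b).
Proof.
  intros Ha Hb. pose proof (is_derive_mult f g x a b Ha Hb) as H.
  apply H. intros; apply Rmult_comm.
Qed.

Lemma is_derive_sub (f g : R -> R) x a b : is_derive f x a -> is_derive g x b ->
  is_derive (fun s => f s - g s) x (a - b).
Proof.
  intros Ha Hb. apply (is_derive_minus f g x a b Ha Hb).
Qed.

Lemma is_derive_exp_lin (L t : R) : is_derive (fun s => exp (L * s)) t (L * exp (L * t)).
Proof. auto_derive; [exact I| ring]. Qed.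

Definition sol (c d : R) (x : R -> R * R) : Prop :=
  forall t : R,
    x t <> (0, 0) /\
    is_derive (fun s => fst (x s)) t (- (c * snd (x t) / (norm2 (x t)) ^ 2)) /\
    is_derive (fun s => snd (x s)) t (c * fst (x t) / (norm2 (x t)) ^ 2 - d).

Lemma Q_pos (v : R * R) : v <> (0,0) -> 0 < fst v ^ 2 + snd v ^ 2.
Proof.
  destruct v as [a b]; simpl; intros H.
  destruct (Req_dec a 0); destruct (Req_dec b 0); subst; try (exfalso; now apply H).
  - nra.
  - nra.
  - nra.
Qed.

Lemma norm2_sq v : norm2 v ^ 2 = fst v ^ 2 + snd v ^ 2.
Proof.
  unfold norm2. rewrite <- Rsqr_pow2. rewrite Rsqr_sqrt; [reflexivity|nra].
Qed.

Lemma norm2_nonneg v : 0 <= norm2 v.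
Proof. apply sqrt_pos. Qed.

Lemma norm2_pos v : v <> (0,0) -> 0 < norm2 v.
Proof. intros H. apply sqrt_lt_R0. now apply Q_pos. Qed.

Lemma ln_norm2 v : v <> (0,0) -> ln (norm2 v) = ln (fst v ^ 2 + snd v ^ 2) / 2.
Proof.
  intros H. pose proof (Q_pos v H) as HQ. unfold norm2.
  assert (Hs : 0 < sqrt (fst v ^ 2 + snd v ^ 2)) by (apply sqrt_lt_R0; lra).
  replace (ln (fst v ^ 2 + snd v ^ 2)) with (ln (sqrt (fst v ^ 2 + snd v ^ 2) * sqrt (fst v ^ 2 + snd v ^ 2))).
  - rewrite ln_mult; lra.
  - now rewrite sqrt_sqrt by lra.
Qed.

Lemma is_derive_sq f t l : is_derive f t l -> is_derive (fun s => f s ^ 2) t (2 * f t * l).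
Proof.
  intros H.
  pose proof (is_derive_mult f f t l l H H) as H2.
  apply (is_derive_ext (fun s => mult (f s) (f s))).
  { intros s. unfold mult; simpl. ring. }
  replace (2 * f t * l) with (plus (mult l (f t)) (mult (f t) l)).
  - apply H2. intros; apply Rmult_comm.
  - unfold plus, mult; simpl. change (l * f t + f t * l = 2 * f t * l). ring.
Qed.

Lemma conservation c d x : sol c d x -> forall t,
  c * ln (norm2 (x t)) - d * fst (x t) = c * ln (norm2 (x 0)) - d * fst (x 0).
Proof.
  intros Hs.
  set (Phi := fun t => c * (ln (fst (x t) ^ 2 + snd (x t) ^ 2) / 2) - d * fst (x t)).
  assert (HP : forall t, is_derive Phi t 0).
  { intros t. destruct (Hs t) as [Hne [H1 H2]].
    pose proof (Q_pos _ Hne) as HQ. pose proof (norm2_sq (x t)) as Hn.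
    set (Q := fst (x t) ^ 2 + snd (x t) ^ 2) in *.
    pose proof (is_derive_plus _ _ _ _ _ (is_derive_sq _ _ _ H1) (is_derive_sq _ _ _ H2)) as HQd.
    pose proof (is_derive_comp ln (fun s => plus (fst (x s) ^ 2) (snd (x s) ^ 2)) t _ _
                  (is_derive_ln _ HQ) HQd) as Hl.
    pose proof (is_derive_scal _ _ (c / 2) _ Hl) as Hl2.
    pose proof (is_derive_scal _ _ d _ H1) as Hd.
    pose proof (is_derive_minus _ _ _ _ _ Hl2 Hd) as Hm.
    unfold Phi. eapply is_derive_ext; [| eapply is_derive_eq; [exact Hm|]].
    - intros s. unfold minus, plus, opp; simpl. field.
    - unfold minus, plus, opp, scal, mult; simpl. unfold mult; simpl.
      fold Q. replace (norm2 (x t) * (norm2 (x t) * 1)) with Q by (rewrite <- Hn; ring). field. lra. }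
  intros t. pose proof (deriv0_const Phi HP 0 t) as E. unfold Phi in E.
  rewrite !ln_norm2. lra. apply (Hs 0). apply (Hs t).
Qed.

Lemma sqrt_sq_le a b : 0 <= b -> a ^ 2 <= b ^ 2 -> Rabs a <= b.
Proof.
  intros Hb H. rewrite <- (Rabs_pos_eq b Hb). apply Rsqr_le_abs_0.
  rewrite !Rsqr_pow2; exact H.
Qed.

Lemma lagrange a b c d : (a*d - b*c)^2 <= (a^2+b^2)*(c^2+d^2).
Proof.
  assert (E : (a^2+b^2)*(c^2+d^2) = (a*d - b*c)^2 + (a*c+b*d)^2) by ring.
  rewrite E. pose proof (pow2_ge_0 (a*c+b*d)). lra.
Qed.

Lemma lagrange2 a b c d : (a*c + b*d)^2 <= (a^2+b^2)*(c^2+d^2).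
Proof.
  assert (E : (a^2+b^2)*(c^2+d^2) = (a*d - b*c)^2 + (a*c+b*d)^2) by ring.
  rewrite E. pose proof (pow2_ge_0 (a*d-b*c)). lra.
Qed.

Lemma lip_alg x1 x2 y1 y2 m :
  0 < m -> m <= norm2 (x1, x2) -> m <= norm2 (y1, y2) ->
  Rabs ((x1 * y2 - x2 * y1) * ((x1^2 + x2^2) - (y1^2 + y2^2))
         / ((x1^2 + x2^2) * (y1^2 + y2^2)))
  <= 2 / m ^ 2 * ((x1 - y1)^2 + (x2 - y2)^2).
Proof.
  intros Hm Hx Hy.
  set (nx := norm2 (x1, x2)) in *. set (ny := norm2 (y1, y2)) in *.
  assert (HX : nx ^ 2 = x1^2 + x2^2) by (unfold nx; rewrite norm2_sq; reflexivity).
  assert (HY : ny ^ 2 = y1^2 + y2^2) by (unfold ny; rewrite norm2_sq; reflexivity).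
  set (D := (x1 - y1)^2 + (x2 - y2)^2).
  assert (HD : 0 <= D) by (unfold D; apply Rplus_le_le_0_compat; apply pow2_ge_0).
  set (sd := sqrt D).
  assert (Hsd : sd ^ 2 = D) by (unfold sd; rewrite <- Rsqr_pow2; apply Rsqr_sqrt; lra).
  assert (Hsd0 : 0 <= sd) by apply sqrt_pos.
  assert (Hcr : Rabs (x1 * y2 - x2 * y1) <= sd * ny).
  { apply sqrt_sq_le. apply Rmult_le_pos; lra. rewrite Rpow_mult_distr, Hsd, HY. unfold D. 
    replace (x1 * y2 - x2 * y1) with ((x1 - y1) * y2 - (x2 - y2) * y1) by ring.
    apply lagrange. }
  assert (Hdot : x1 * y1 + x2 * y2 <= nx * ny).
  { apply Rle_trans with (Rabs (x1 * y1 + x2 * y2)); [apply Rle_abs|].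
    apply sqrt_sq_le. apply Rmult_le_pos; lra. rewrite Rpow_mult_distr, HX, HY.
    apply lagrange2. }
  assert (Hdn : Rabs (nx - ny) <= sd).
  { apply sqrt_sq_le. lra. rewrite Hsd. unfold D.
    replace ((nx - ny)^2) with (nx^2 + ny^2 - 2 * (nx * ny)) by ring.
    rewrite HX, HY. 
    replace ((x1 - y1) ^ 2 + (x2 - y2) ^ 2) with ((x1^2+x2^2) + (y1^2+y2^2) - 2 * (x1 * y1 + x2 * y2)) by ring.
    lra. }
  rewrite <- HX, <- HY.
  replace (nx ^ 2 - ny ^ 2) with ((nx - ny) * (nx + ny)) by ring.
  assert (Hnx : 0 < nx) by lra. assert (Hny : 0 < ny) by lra. clearbody nx ny sd D.
  unfold Rdiv. rewrite Rabs_mult, Rabs_mult, Rabs_mult.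
  rewrite (Rabs_pos_eq (nx + ny)) by lra.
  rewrite Rabs_inv, (Rabs_pos_eq (nx ^ 2 * ny ^ 2)) by (apply Rmult_le_pos; apply pow2_ge_0).
  assert (Hb : Rabs (x1 * y2 - x2 * y1) * Rabs (nx - ny) * (nx + ny) <= D * ny * (nx + ny)).
  { rewrite <- Hsd. apply Rmult_le_compat_r. lra.
    replace (sd ^ 2 * ny) with ((sd * ny) * sd) by ring.
    apply Rmult_le_compat; try apply Rabs_pos; assumption. }
  apply Rle_trans with (D * ny * (nx + ny) * / (nx ^ 2 * ny ^ 2)).
  { apply Rmult_le_compat_r. left; apply Rinv_0_lt_compat; apply Rmult_lt_0_compat; apply pow_lt; lra. lra. }
  replace (D * ny * (nx + ny) * / (nx ^ 2 * ny ^ 2)) with (D * (/ (nx * ny) + / (nx * nx))) by (field; lra).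
  rewrite (Rmult_comm _ D). apply Rmult_le_compat_l; [lra|].


  assert (/ (nx * ny) <= / m ^ 2).
  { apply Rinv_le_contravar. apply pow_lt; lra. simpl. rewrite Rmult_1_r. apply Rmult_le_compat; lra. }
  assert (/ (nx * nx) <= / m ^ 2).
  { apply Rinv_le_contravar. apply pow_lt; lra. simpl. rewrite Rmult_1_r. apply Rmult_le_compat; lra. }
  lra.
Qed.

Lemma sq_sum_zero a b : a ^ 2 + b ^ 2 <= 0 -> a = 0 /\ b = 0.
Proof.
  intros H. pose proof (pow2_ge_0 a). pose proof (pow2_ge_0 b).
  assert (a ^ 2 = 0) by lra. assert (b ^ 2 = 0) by lra.
  split; nra.
Qed.

Lemma uniqueness c d x y m : 0 < c -> 0 < m -> sol c d x -> sol c d y ->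
  (forall t, m <= norm2 (x t)) -> (forall t, m <= norm2 (y t)) ->
  x 0 = y 0 -> forall t, x t = y t.
Proof.
  intros Hc Hm Hx Hy Hmx Hmy H0.
  set (D := fun t => (fst (x t) - fst (y t)) ^ 2 + (snd (x t) - snd (y t)) ^ 2).
  set (L := 4 * c / m ^ 2).
  assert (HL : 0 < L) by (unfold L; apply Rdiv_lt_0_compat; [lra| apply pow_lt; lra]).
  assert (HD0 : D 0 = 0) by (unfold D; rewrite H0; ring).
  assert (HDpos : forall t, 0 <= D t).
  { intros t; unfold D; apply Rplus_le_le_0_compat; apply pow2_ge_0. }
  set (dD := fun t =>
     2 * (fst (x t) - fst (y t)) * (- (c * snd (x t) / norm2 (x t) ^ 2) - - (c * snd (y t) / norm2 (y t) ^ 2))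
   + 2 * (snd (x t) - snd (y t)) * ((c * fst (x t) / norm2 (x t) ^ 2 - d) - (c * fst (y t) / norm2 (y t) ^ 2 - d))).
  assert (HdD : forall t, is_derive D t (dD t)).
  { intros t. destruct (Hx t) as [_ [Hx1 Hx2]]. destruct (Hy t) as [_ [Hy1 Hy2]].
    pose proof (is_derive_sq _ _ _ (is_derive_sub _ _ _ _ _ Hx1 Hy1)) as A1.
    pose proof (is_derive_sq _ _ _ (is_derive_sub _ _ _ _ _ Hx2 Hy2)) as A2.
    exact (is_derive_plus _ _ _ _ _ A1 A2). }
  assert (Hbound : forall t, Rabs (dD t) <= L * D t).
  { intros t. unfold dD, D. destruct (Hx t) as [Hxn _]. destruct (Hy t) as [Hyn _].
    pose proof (Q_pos _ Hxn) as QX. pose proof (Q_pos _ Hyn) as QY.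
    pose proof (Hmx t) as Mx. pose proof (Hmy t) as My.
    destruct (x t) as [x1 x2]. destruct (y t) as [y1 y2]. cbn [fst snd] in *.
    pose proof (lip_alg x1 x2 y1 y2 m Hm Mx My) as Hl.
    rewrite !norm2_sq. cbn [fst snd].
    match goal with |- Rabs ?e <= _ => 
    assert (E : e = 2 * c * ((x1 * y2 - x2 * y1) * ((x1^2 + x2^2) - (y1^2 + y2^2))
         / ((x1^2 + x2^2) * (y1^2 + y2^2)))) end.
    { field. lra. }
    rewrite E, Rabs_mult, (Rabs_pos_eq (2 * c)) by lra.
    unfold L. replace (4 * c / m ^ 2 * ((x1 - y1) ^ 2 + (x2 - y2) ^ 2)) with
      ((2 * c) * (2 / m ^ 2 * ((x1 - y1) ^ 2 + (x2 - y2) ^ 2))) by (field; lra).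
    apply Rmult_le_compat_l; [lra| exact Hl]. }
  assert (HDz : forall t, D t = 0).
  { intros t. destruct (Rle_dec 0 t) as [Ht|Ht].
    - set (u := fun s => D s * exp (- L * s)).
      assert (Hu : forall s, is_derive u s (dD s * exp (- L * s) + D s * (- L * exp (- L * s)))).
      { intros s. apply (is_derive_mul D (fun s => exp (-L * s))). apply HdD. apply is_derive_exp_lin. }
      pose proof (deriv_nonpos_decr u _ Hu) as Hdec.
      assert (Hle : u t <= u 0).
      { apply Hdec; [|exact Ht]. intros s. pose proof (Hbound s) as B.
        pose proof (Rle_abs (dD s)). pose proof (exp_pos (-L*s)). 
        replace (dD s * exp (- L * s) + D s * (- L * exp (- L * s))) with
          ((dD s - L * D s) * exp (- L * s)) by ring.
        apply Rmult_le_0_r; lra. }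
      unfold u in Hle. rewrite HD0 in Hle. pose proof (exp_pos (-L*t)). pose proof (HDpos t).
      nra.
    - set (u := fun s => - (D s * exp (L * s))).
      assert (Hu : forall s, is_derive u s (- (dD s * exp (L * s) + D s * (L * exp (L * s))))).
      { intros s. apply (is_derive_opp (fun s => D s * exp (L * s))). apply (is_derive_mul D (fun s => exp (L * s))). apply HdD. apply is_derive_exp_lin. }
      pose proof (deriv_nonpos_decr u _ Hu) as Hdec.
      assert (Hle : u 0 <= u t).
      { apply Hdec; [|lra]. intros s. pose proof (Hbound s) as B.
        pose proof (Rle_abs (- dD s)). rewrite Rabs_Ropp in *. pose proof (exp_pos (L*s)). 
        replace (- (dD s * exp (L * s) + D s * (L * exp (L * s)))) with
          ((- dD s - L * D s) * exp (L * s)) by ring.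
        apply Rmult_le_0_r; lra. }
      unfold u in Hle. rewrite HD0 in Hle. pose proof (exp_pos (L*t)). pose proof (HDpos t).
      nra. }
  intros t. pose proof (HDz t) as Z. unfold D in Z.
  destruct (sq_sum_zero (fst (x t) - fst (y t)) (snd (x t) - snd (y t))) as [Z1 Z2]; [lra|].
  destruct (x t), (y t); cbn [fst snd] in *. f_equal; lra.
Qed.

Lemma incr_on f df a b : (forall x, a <= x <= b -> is_derive f x (df x) /\ 0 < df x) ->
  forall x y, a <= x -> x < y -> y <= b -> f x < f y.
Proof.
  intros H x y H1 H2 H3.
  apply (incr_function_le f (Finite a) (Finite b) df); simpl; auto.
  - intros z Hz1 Hz2; apply H; lra.
  - intros z Hz1 Hz2; apply H; lra.
Qed.

Lemma inv_deriv f df g a b y : a < b ->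
  (forall x, a <= x <= b -> is_derive f x (df x) /\ 0 < df x) ->
  (forall z, f a <= z <= f b -> a <= g z <= b /\ f (g z) = z) ->
  f a < y < f b -> is_derive g y (/ df (g y)).
Proof.
  intros Hab Hf Hg Hy.
  assert (Hinc := incr_on f df a b Hf).
  assert (Hfab : f a < f b) by (apply Hinc; lra).
  assert (Hga : g (f a) = a).
  { destruct (Hg (f a)) as [Hr He]; [lra|].
    destruct (Rle_lt_or_eq_dec a (g (f a))) as [Hl|Hl]; [lra| |auto].
    exfalso. pose proof (Hinc a (g (f a)) (Rle_refl _) Hl (proj2 Hr)). lra. }
  assert (Hgb : g (f b) = b).
  { destruct (Hg (f b)) as [Hr He]; [lra|].
    destruct (Rle_lt_or_eq_dec (g (f b)) b) as [Hl|Hl]; [lra| |auto].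
    exfalso. pose proof (Hinc (g (f b)) b (proj1 Hr) Hl (Rle_refl _)). lra. }
  assert (Prf : forall a0, g (f a) <= a0 <= g (f b) -> derivable_pt f a0).
  { intros a0 Ha0. rewrite Hga, Hgb in Ha0. exists (df a0).
    apply is_derive_Reals. apply Hf; lra. }
  assert (Hcont : continuity_pt g y).
  { apply (continuity_pt_recip_interv f g a b Hab).
    - intros; apply Hinc; lra.
    - intros z Hz1 Hz2; unfold comp, id; apply Hg; lra.
    - intros z Hz1 Hz2; apply Hg; lra.
    - intros z Hz. apply (is_derive_cont_pt f z (df z)). apply Hf; lra.
    - lra. }
  assert (Hgy : g (f a) <= g y <= g (f b)).
  { rewrite Hga, Hgb. apply Hg; lra. }
  assert (Hd := derivable_pt_lim_recip_interv f g (f a) (f b) y Prf Hcont Hfab Hy Hgy).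
  assert (Hdp : derive_pt f (g y) (Prf (g y) Hgy) = df (g y)).
  { apply derive_pt_eq_0. apply is_derive_Reals. apply Hf. apply Hg; lra. }
  rewrite Hdp in Hd.
  apply is_derive_Reals. replace (/ df (g y)) with (1 / df (g y)) by (unfold Rdiv; ring).
  apply Hd.
  - intros z Hz; unfold comp, id; apply Hg; lra.
  - assert (0 < df (g y)) by (apply Hf; apply Hg; lra). lra.
Qed.

Lemma inv_fun f df a b : a < b ->
  (forall x, a <= x <= b -> is_derive f x (df x) /\ 0 < df x) ->
  exists g, (forall z, f a <= z <= f b -> a <= g z <= b /\ f (g z) = z) /\
    (forall y, f a < y < f b -> is_derive g y (/ df (g y))).
Proof.
  intros Hab Hf.
  assert (Hcont : forall x, a <= x <= b -> continuity_pt f x).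
  { intros x Hx. apply (is_derive_cont_pt f x (df x)). apply Hf; lra. }
  set (g := fun z => match Rle_dec (f a) z with
     | left H1 => match Rle_dec z (f b) with
        | left H2 => proj1_sig (f_interv_is_interv f a b z Hab (conj H1 H2) Hcont)
        | right _ => a end
     | right _ => a end).
  assert (Hg : forall z, f a <= z <= f b -> a <= g z <= b /\ f (g z) = z).
  { intros z Hz. unfold g. destruct (Rle_dec (f a) z); [|lra].
    destruct (Rle_dec z (f b)); [|lra].
    destruct (f_interv_is_interv f a b z Hab (conj r r0) Hcont) as [w Hw]. simpl. exact Hw. }
  exists g. split; [exact Hg|].
  intros y Hy. apply (inv_deriv f df g a b y Hab Hf Hg Hy).
Qed.

Definition pW (w : R) := w * exp (- w).

Lemma pW_deriv x : is_derive pW x ((1 - x) * exp (- x)).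
Proof. unfold pW. auto_derive; [exact I| ring]. Qed.

Lemma W_exists (kap : R) : 0 < kap -> kap * exp 1 < 1 ->
  let wl := - (kap * exp 1) in let wh := 1 - (1 - kap * exp 1) / 2 in
  exists W : R -> R,
    (forall b, - kap <= b <= kap -> wl <= W b <= wh /\ pW (W b) = b) /\
    (forall b, - kap <= b <= kap -> is_derive W b (exp (W b) / (1 - W b))) /\
    (forall w b, wl <= w <= wh -> pW w = b -> - kap <= b <= kap -> W b = w).
Proof.
  intros Hk Hke wl wh.
  pose proof (exp_pos 1) as He0.
  assert (He1 : 1 < exp 1) by (pose proof (exp_ineq1 1 R1_neq_R0); lra).
  assert (Hke0 : 0 <= kap * exp 1) by (apply Rmult_le_pos; lra).
  set (eps := (1 - kap * exp 1) / 2).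
  assert (Heps : 0 < eps <= 1/2) by (unfold eps; split; lra).
  assert (Hwlwh : wl < wh) by (unfold wl, wh; fold eps; lra).
  assert (Hwh1 : wh < 1) by (unfold wh; fold eps; lra).
  assert (Hdf : forall x, wl <= x <= wh -> is_derive pW x ((fun x => (1 - x) * exp (- x)) x) /\ 0 < (1 - x) * exp (- x)).
  { intros x Hx. split. apply pW_deriv. apply Rmult_lt_0_compat; [lra| apply exp_pos]. }
  destruct (inv_fun pW _ wl wh Hwlwh Hdf) as [W [HW1 HW2]].
  assert (Hpl : pW wl < - kap).
  { unfold pW, wl. rewrite Ropp_involutive.
    assert (1 <= exp (kap * exp 1)).
    { pose proof (exp_ineq1_le (kap * exp 1)). lra. }
    assert (kap < kap * exp 1) by nra.
    assert (kap * exp 1 <= kap * exp 1 * exp (kap * exp 1)) by nra.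
    lra. }
  assert (Hph : kap < pW wh).
  { unfold pW, wh. fold eps. replace (- (1 - eps)) with (eps - 1) by ring.
    unfold Rminus. rewrite exp_plus. replace (exp (-(1))) with (/ exp 1) by (rewrite exp_Ropp; reflexivity).
    assert (1 + eps < exp eps) by (apply exp_ineq1; lra).
    assert (Hk1 : kap = (1 - 2 * eps) / exp 1) by (unfold eps; field; lra).
    rewrite Hk1. unfold Rdiv. rewrite <- Rmult_assoc.
    apply Rmult_lt_compat_r. apply Rinv_0_lt_compat; lra. nra. }
  assert (Hinc := incr_on pW _ wl wh Hdf).
  exists W. split; [|split].
  - intros b Hb. apply HW1. lra.
  - intros b Hb. 
    assert (Hd := HW2 b ltac:(lra)). cbv beta in Hd.
    eapply is_derive_eq; [exact Hd|].
    destruct (HW1 b ltac:(lra)) as [Hr _].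
    rewrite exp_Ropp. unfold Rdiv. rewrite Rinv_mult, Rinv_inv. apply Rmult_comm.
  - intros w b Hw Hp Hb. destruct (HW1 b ltac:(lra)) as [Hr He].
    destruct (Rtotal_order (W b) w) as [Hl|[Hl|Hl]]; auto.
    + exfalso. pose proof (Hinc (W b) w ltac:(lra) Hl ltac:(lra)). lra.
    + exfalso. pose proof (Hinc w (W b) ltac:(lra) Hl ltac:(lra)). lra.
Qed.

Lemma norm2_polar r th : 0 <= r -> norm2 (r * cos th, r * sin th) = r.
Proof.
  intros Hr. unfold norm2; cbn [fst snd].
  replace ((r * cos th) ^ 2 + (r * sin th) ^ 2) with (r ^ 2 * (sin th ^ 2 + cos th ^ 2)) by ring.
  rewrite <- !Rsqr_pow2, sin2_cos2, Rmult_1_r. apply sqrt_Rsqr; exact Hr.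
Qed.

Lemma polar a b : (a, b) <> (0, 0) ->
  exists th, a = norm2 (a, b) * cos th /\ b = norm2 (a, b) * sin th.
Proof.
  intros H. pose proof (norm2_pos _ H) as Hr. pose proof (norm2_sq (a, b)) as Hsq.
  cbn [fst snd] in Hsq. set (r := norm2 (a, b)) in *. clearbody r.
  set (u := a / r).
  assert (Hu2 : 1 - u² = (b / r)²).
  { unfold u, Rsqr. field_simplify_eq; [| lra]. lra. }
  assert (Hu : -1 <= u <= 1).
  { assert (u² <= 1) by (pose proof (Rle_0_sqr (b / r)); lra).
    assert (Rabs u <= 1).
    { rewrite <- Rabs_R1. apply Rsqr_le_abs_0. rewrite Rsqr_1. exact H0. }
    apply Rabs_le_between in H1. lra. }
  destruct (Rle_dec 0 b) as [Hb|Hb].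
  - exists (acos u). rewrite cos_acos by exact Hu. rewrite sin_acos by exact Hu.
    rewrite Hu2. rewrite sqrt_Rsqr.
    + unfold u. split; field; lra.
    + apply Rdiv_le_0_compat; lra.
  - exists (- acos u). rewrite cos_neg, sin_neg. rewrite cos_acos by exact Hu. rewrite sin_acos by exact Hu.
    rewrite Hu2. replace ((b / r)²) with ((- (b / r))²) by (unfold Rsqr; ring). rewrite sqrt_Rsqr.
    + unfold u. split; field; lra.
    + assert (0 < - b / r) by (apply Rdiv_lt_0_compat; lra). unfold Rdiv in *. lra.
Qed.

Lemma div_le_div a a' b b' : 0 < a' -> a' <= a -> 0 < b -> b <= b' -> a' / b' <= a / b.
Proof.
  intros Ha Haa Hb Hbb. unfold Rdiv. apply Rmult_le_compat; try lra.
  left; apply Rinv_0_lt_compat; lra. apply Rinv_le_contravar; lra.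
Qed.

Lemma construct c d s x0 : 0 < c -> 0 < d -> 0 < s -> d / c * s * exp 1 < 1 ->
  x0 <> (0,0) -> d / c * norm2 x0 <= 1/2 ->
  ln (norm2 x0) - d / c * fst x0 = ln s ->
  exists x P, sol c d x /\ x 0 = x0 /\ 0 < P /\ (forall t, x (t + P) = x t) /\
    (forall t, s * exp (- (d / c * s * exp 1)) <= norm2 (x t)).
Proof.
  intros Hc Hd Hs Hke Hx0 Hkr Hln.
  set (k := d / c) in *. assert (Hk : 0 < k) by (unfold k; apply Rdiv_lt_0_compat; lra).
  set (kap := k * s) in *. assert (Hkap : 0 < kap) by (unfold kap; nra).
  pose proof (exp_pos 1) as He0.
  assert (He1 : 1 < exp 1) by (pose proof (exp_ineq1 1 R1_neq_R0); lra).
  destruct (W_exists kap Hkap Hke) as [W [HW1 [HW2 HW3]]].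
  set (wl := - (kap * exp 1)) in *. set (wh := 1 - (1 - kap * exp 1) / 2) in *.
  assert (Hwh1 : wh < 1) by (unfold wh; lra).
  assert (Hwh2 : 1/2 <= wh) by (unfold wh; nra).
  assert (Hcb : forall th, - kap <= kap * cos th <= kap).
  { intros th. pose proof (COS_bound th). split; nra. }
  set (w := fun th => W (kap * cos th)).
  assert (Hw : forall th, wl <= w th <= wh /\ pW (w th) = kap * cos th).
  { intros th. apply HW1, Hcb. }
  assert (Hwd : forall th, is_derive w th (exp (w th) / (1 - w th) * (kap * - sin th))).
  { intros th. unfold w.
    pose proof (is_derive_comp W (fun th => kap * cos th) th _ _ (HW2 _ (Hcb th))
       (is_derive_scal _ _ kap _ (is_derive_cos th))) as H.
    eapply is_derive_eq; [exact H|]. unfold scal; simpl; unfold mult; simpl. ring. }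
  set (Rr := fun th => s * exp (w th)).
  assert (HRd : forall th, is_derive Rr th (s * (exp (w th) * (exp (w th) / (1 - w th) * (kap * - sin th))))).
  { intros th. unfold Rr. apply is_derive_scal.
    pose proof (is_derive_comp exp w th _ _ (is_derive_exp (w th)) (Hwd th)) as H.
    eapply is_derive_eq; [exact H|]. unfold scal; simpl; unfold mult; simpl. ring. }
  assert (HRpos : forall th, 0 < Rr th) by (intros th; unfold Rr; apply Rmult_lt_0_compat; [lra|apply exp_pos]).
  set (hF := fun th => Rr th ^ 2 / (c * (1 - w th))).
  assert (Hden : forall th, 0 < c * (1 - w th)).
  { intros th. destruct (Hw th). apply Rmult_lt_0_compat; lra. }
  assert (HhF : forall th, 0 < hF th).
  { intros th. unfold hF. apply Rdiv_lt_0_compat; [apply pow_lt, HRpos | apply Hden]. }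
  set (mF := (s * exp wl) ^ 2 / (c * (1 - wl))).
  assert (HmF : 0 < mF).
  { unfold mF. apply Rdiv_lt_0_compat. apply pow_lt, Rmult_lt_0_compat; [lra|apply exp_pos].
    unfold wl. apply Rmult_lt_0_compat; nra. }
  assert (HhFm : forall th, mF <= hF th).
  { intros th. destruct (Hw th) as [[Hw1 Hw2] _]. unfold mF, hF, Rr.
    apply div_le_div.
    - apply pow_lt, Rmult_lt_0_compat; [lra|apply exp_pos].
    - apply pow_incr. split. left; apply Rmult_lt_0_compat; [lra|apply exp_pos].
      apply Rmult_le_compat_l; [lra|]. destruct Hw1 as [Hw1|Hw1]; [left; apply exp_increasing; lra| rewrite Hw1; lra].
    - apply Hden.
    - apply Rmult_le_compat_l; lra. }
  assert (HhFc : forall th, continuous hF th).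
  { intros th. apply (@ex_derive_continuous R_AbsRing R_NormedModule). unfold hF, Rr, w.
    auto_derive. pose proof (Hden th). unfold w in H.
    assert (ex_derive W (kap * cos th)) by (eexists; apply HW2, Hcb).
    repeat split; auto. lra. }
  destruct (polar (fst x0) (snd x0)) as [th0 [Hp Hq]].
  { destruct x0; exact Hx0. }
  replace (fst x0, snd x0) with x0 in Hp, Hq by (destruct x0; reflexivity).
  set (G := fun th => RInt hF th0 th).
  assert (HG : forall th, is_derive G th (hF th)).
  { intros th. apply (is_derive_RInt hF G th0 th); [|apply HhFc].
    apply filter_forall. intros y. unfold G. apply (@RInt_correct R_CompleteNormedModule).
    apply (@ex_RInt_continuous R_CompleteNormedModule). intros; apply HhFc. }
  assert (HG0 : G th0 = 0) by (unfold G; exact (@RInt_point R_CompleteNormedModule th0 hF)).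
  assert (Ginc : forall a b, a < b -> G a < G b).
  { intros a b Hab. apply (incr_function G m_infty p_infty hF); simpl; auto.
    intros; apply HhF. }
  assert (Ginj : forall a b, G a = G b -> a = b).
  { intros a b Heq. destruct (Rtotal_order a b) as [H|[H|H]]; auto;
    [apply Ginc in H | apply Ginc in H]; lra. }
  assert (Gcont : forall th, continuity_pt G th) by (intros th; apply (is_derive_cont_pt _ _ _ (HG th))).
  assert (Gbig : forall T, 0 <= T -> G (th0 + T) >= mF * T /\ G (th0 - T) <= - (mF * T)).
  { intros T HT. split.
    - destruct (mvt_all G hF th0 (th0 + T) HG) as [xi [_ Hxi]]. rewrite HG0 in Hxi.
      pose proof (HhFm xi). nra.
    - destruct (mvt_all G hF th0 (th0 - T) HG) as [xi [_ Hxi]]. rewrite HG0 in Hxi.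
      pose proof (HhFm xi). nra. }
  assert (Gsurj : forall t, exists th, G th = t).
  { intros t. set (T := Rabs t / mF + 1).
    assert (HT : 0 < T) by (unfold T; pose proof (Rabs_pos t); 
      assert (0 <= Rabs t / mF) by (apply Rdiv_le_0_compat; lra); lra).
    assert (HmT : mF * T > Rabs t) by (unfold T; field_simplify; [|lra]; pose proof (Rabs_pos t); lra).
    destruct (Gbig T (Rlt_le _ _ HT)) as [Hb Ha]. clearbody T.
    pose proof (Rle_abs t). pose proof (Rle_abs (-t)). rewrite Rabs_Ropp in *.
    destruct (f_interv_is_interv G (th0 - T) (th0 + T) t ltac:(lra) ltac:(lra)
       (fun x _ => Gcont x)) as [th [_ Hth]].
    exists th; exact Hth. }
  set (Th := fun t => proj1_sig (constructive_indefinite_description _ (Gsurj t))).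
  assert (HTh : forall t, G (Th t) = t).
  { intros t. unfold Th. destruct (constructive_indefinite_description _ (Gsurj t)); auto. }
  assert (HThd : forall t, is_derive Th t (/ hF (Th t))).
  { intros t. apply (inv_deriv G hF Th (Th t - 1) (Th t + 1) t); [lra| | |].
    - intros x _; split; [apply HG| apply HhF].
    - intros z Hz. split; [|apply HTh]. rewrite <- (HTh z) in Hz. split.
      + destruct (Rle_dec (Th t - 1) (Th z)); auto. exfalso.
        assert (G (Th z) < G (Th t - 1)) by (apply Ginc; lra). lra.
      + destruct (Rle_dec (Th z) (Th t + 1)); auto. exfalso.
        assert (G (Th t + 1) < G (Th z)) by (apply Ginc; lra). lra.
    - assert (A := Ginc (Th t - 1) (Th t) ltac:(lra)).
      assert (B := Ginc (Th t) (Th t + 1) ltac:(lra)). rewrite HTh in A, B. lra. }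
  set (r0 := norm2 x0) in *.
  assert (Hr0 : 0 < r0) by (apply norm2_pos; exact Hx0).
  set (w0 := ln (r0 / s)).
  assert (Hw0e : exp w0 = r0 / s) by (unfold w0; apply exp_ln; apply Rdiv_lt_0_compat; lra).
  assert (Hw0 : w0 = k * r0 * cos th0).
  { unfold w0. rewrite ln_div by lra. rewrite Rmult_assoc, <- Hp. lra. }
  assert (Hcos0 := COS_bound th0).
  assert (Hw0b : Rabs w0 <= 1/2).
  { rewrite Hw0. rewrite Rabs_mult, (Rabs_pos_eq (k * r0)) by (apply Rmult_le_pos; lra).
    assert (Rabs (cos th0) <= 1) by (apply Rabs_le; lra).
    assert (0 <= k * r0) by (apply Rmult_le_pos; lra).
    apply Rle_trans with (k * r0 * 1); [apply Rmult_le_compat_l; lra| lra]. }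
  apply Rabs_le_between in Hw0b.
  assert (Hr0se : r0 < s * exp 1).
  { assert (exp w0 < exp 1) by (apply exp_increasing; lra).
    rewrite Hw0e in H. apply (Rmult_lt_compat_l s) in H; [|lra].
    replace (s * (r0 / s)) with r0 in H by (field; lra). exact H. }
  assert (HpW0 : pW w0 = kap * cos th0).
  { unfold pW. rewrite exp_Ropp, Hw0e. rewrite Hw0. unfold kap. field. lra. }
  assert (Hwth0 : w th0 = w0).
  { unfold w. apply HW3; [| exact HpW0| apply Hcb]. split; [|lra].
    unfold wl. rewrite Hw0. unfold kap.
    assert (0 <= k * r0 * (cos th0 + 1)) by (apply Rmult_le_pos; [apply Rmult_le_pos|]; lra).
    assert (k * r0 < k * (s * exp 1)) by (apply Rmult_lt_compat_l; lra). lra. }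
  assert (HRr0 : Rr th0 = r0).
  { unfold Rr. rewrite Hwth0, Hw0e. field. lra. }
  assert (HTh0 : Th 0 = th0) by (apply Ginj; rewrite HTh, HG0; reflexivity).
  assert (Hcp : forall th, cos (th + 2 * PI) = cos th) by (intros; rewrite cos_plus, cos_2PI, sin_2PI; ring).
  assert (Hsp : forall th, sin (th + 2 * PI) = sin th) by (intros; rewrite sin_plus, cos_2PI, sin_2PI; ring).
  assert (Hwp : forall th, w (th + 2 * PI) = w th) by (intros; unfold w; rewrite Hcp; reflexivity).
  assert (HRp : forall th, Rr (th + 2 * PI) = Rr th) by (intros; unfold Rr; rewrite Hwp; reflexivity).
  assert (HhFp : forall th, hF (th + 2 * PI) = hF th) by (intros; unfold hF; rewrite HRp, Hwp; reflexivity).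
  set (P := G (th0 + 2 * PI)).
  assert (HP : 0 < P) by (unfold P; rewrite <- HG0; apply Ginc; pose proof PI_RGT_0; lra).
  assert (HGP : forall th, G (th + 2 * PI) = G th + P).
  { intros th.
    assert (Hd0 : forall th, is_derive (fun th => G (th + 2 * PI) - G th) th 0).
    { intros th'. 
      assert (H1 : is_derive (fun th => G (th + 2 * PI)) th' (hF (th' + 2 * PI))).
      { pose proof (is_derive_comp G (fun th => th + 2 * PI) th' (hF (th' + 2 * PI)) 1 (HG (th' + 2 * PI))) as H.
        eapply is_derive_eq; [apply H|]. auto_derive; [exact I| ring].
        unfold scal; simpl; unfold mult; simpl; ring. }
      eapply is_derive_eq; [apply (is_derive_sub _ _ _ _ _ H1 (HG th'))|]. rewrite HhFp; apply Rminus_diag_eq; reflexivity. }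
    pose proof (deriv0_const _ Hd0 th0 th) as E. cbv beta in E. rewrite HG0 in E. fold P in E. lra. }
  assert (HThP : forall t, Th (t + P) = Th t + 2 * PI).
  { intros t. apply Ginj. rewrite HGP, !HTh. reflexivity. }
  set (x := fun t => (Rr (Th t) * cos (Th t), Rr (Th t) * sin (Th t))).
  assert (Hnx : forall t, norm2 (x t) = Rr (Th t)).
  { intros t. unfold x. apply norm2_polar. left; apply HRpos. }
  exists x, P. split; [|split; [|split; [exact HP|split]]].
  - intros t. set (th := Th t).
    assert (HA : is_derive (fun t => Rr (Th t)) t (/ hF th * (s * (exp (w th) * (exp (w th) / (1 - w th) * (kap * - sin th)))))).
    { pose proof (is_derive_comp Rr Th t _ _ (HRd th) (HThd t)) as H.
      eapply is_derive_eq; [apply H|]. reflexivity. }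
    assert (HB : is_derive (fun t => cos (Th t)) t (/ hF th * - sin th)).
    { pose proof (is_derive_comp cos Th t _ _ (is_derive_cos th) (HThd t)) as H.
      eapply is_derive_eq; [apply H|]. reflexivity. }
    assert (HC : is_derive (fun t => sin (Th t)) t (/ hF th * cos th)).
    { pose proof (is_derive_comp sin Th t _ _ (is_derive_sin th) (HThd t)) as H.
      eapply is_derive_eq; [apply H|]. reflexivity. }
    pose proof (HRpos th) as HRt. pose proof (Hden th) as Hdt.
    destruct (Hw th) as [_ HpW].
    assert (Hwe : w th = kap * cos th * exp (w th)).
    { unfold pW in HpW. rewrite <- HpW. rewrite Rmult_assoc, <- exp_plus.
      replace (- w th + w th) with 0 by ring. rewrite exp_0; ring. }
    split; [|split].
    + intros H0. pose proof (Hnx t) as Hn. rewrite H0 in Hn. unfold norm2 in Hn. cbn [fst snd] in Hn.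
      replace (0 ^ 2 + 0 ^ 2) with 0 in Hn by ring. rewrite sqrt_0 in Hn. fold th in Hn. lra.
    + apply (is_derive_ext (fun t => Rr (Th t) * cos (Th t))). { intros; reflexivity. }
      eapply is_derive_eq; [apply (is_derive_mul _ _ _ _ _ HA HB)|].
      rewrite Hnx. fold th. unfold x. fold th. cbn [snd]. 
      unfold hF. unfold Rr in *. 
      set (E := exp (w th)) in *. assert (HE : 0 < E) by apply exp_pos. clearbody E.
      rewrite Hwe in *. unfold kap, k in *. field. 
      repeat split; try lra.
      assert (c * (1 - d / c * s * cos th * E) = c - d * s * cos th * E) by (field; lra). lra.
    + apply (is_derive_ext (fun t => Rr (Th t) * sin (Th t))). { intros; reflexivity. }
      eapply is_derive_eq; [apply (is_derive_mul _ _ _ _ _ HA HC)|].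
      rewrite Hnx. fold th. unfold x. fold th. cbn [fst]. 
      unfold hF. unfold Rr in *. 
      set (E := exp (w th)) in *. assert (HE : 0 < E) by apply exp_pos. clearbody E.
      assert (Hsc := sin2_cos2 th). unfold Rsqr in Hsc.
      rewrite Hwe in *. unfold kap, k in *.
      assert (c * (1 - d / c * s * cos th * E) = c - d * s * cos th * E) by (field; lra).
      match goal with |- ?L = ?R => assert (L - R = d * (1 - (sin th * sin th + cos th * cos th))) by (field; repeat split; lra) end.
      rewrite Hsc in H0. lra.
  - unfold x. rewrite HTh0, HRr0. destruct x0 as [p q]. cbn [fst snd] in Hp, Hq. rewrite <- Hp, <- Hq. reflexivity.
  - intros t. unfold x. rewrite HThP, HRp, Hcp, Hsp. reflexivity.
  - intros t. rewrite Hnx. unfold Rr. destruct (Hw (Th t)) as [[Hl _] _].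
    apply Rmult_le_compat_l; [lra|]. destruct Hl as [Hl|Hl]; [left; apply exp_increasing; exact Hl| rewrite Hl; lra].
Qed.

Lemma fst_le_norm v : Rabs (fst v) <= norm2 v.
Proof.
  apply sqrt_sq_le. apply norm2_nonneg. rewrite norm2_sq. pose proof (pow2_ge_0 (snd v)). lra.
Qed.

Lemma snd_le_norm v : Rabs (snd v) <= norm2 v.
Proof.
  apply sqrt_sq_le. apply norm2_nonneg. rewrite norm2_sq. pose proof (pow2_ge_0 (fst v)). lra.
Qed.

Lemma sol_lower c d s y : 0 < c -> 0 < d -> 0 < s -> sol c d y ->
  ln (norm2 (y 0)) - d / c * fst (y 0) = ln s ->
  forall t, Rmin (c / d) (s / exp 1) <= norm2 (y t).
Proof.
  intros Hc Hd Hs Hy Hln t.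
  pose proof (conservation c d y Hy t) as Hcons.
  destruct (Hy t) as [Hne _]. pose proof (norm2_pos _ Hne) as Hr.
  set (r := norm2 (y t)) in *.
  assert (Hln2 : ln r = ln s + d / c * fst (y t)).
  { apply (Rmult_eq_reg_l c); [|lra].
    replace (c * (ln s + d / c * fst (y t))) with (c * ln s + d * fst (y t)) by (field; lra).
    rewrite <- Hln. replace (c * (ln (norm2 (y 0)) - d / c * fst (y 0))) with
      (c * ln (norm2 (y 0)) - d * fst (y 0)) by (field; lra). lra. }
  pose proof (fst_le_norm (y t)) as Hf. fold r in Hf. apply Rabs_le_between in Hf.
  destruct (Rle_dec (c / d) r) as [H1|H1].
  - apply Rle_trans with (c / d); [apply Rmin_l| exact H1].
  - apply Rle_trans with (s / exp 1); [apply Rmin_r|].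
    assert (Hkr : d / c * r < 1).
    { apply Rnot_le_lt in H1. apply (Rmult_lt_compat_l (d / c)) in H1.
      replace (d / c * (c / d)) with 1 in H1 by (field; lra). exact H1.
      apply Rdiv_lt_0_compat; lra. }
    assert (Hk : 0 < d / c) by (apply Rdiv_lt_0_compat; lra).
    assert (ln s - 1 < ln r).
    { rewrite Hln2. assert (d / c * fst (y t) >= - (d / c * r)) by nra. lra. }
    apply exp_increasing in H. rewrite exp_ln in H by lra. unfold Rminus in H. rewrite exp_plus in H.
    rewrite exp_ln in H by lra. rewrite exp_Ropp in H. unfold Rdiv. lra.
Qed.

Lemma le_of_sq a b : 0 <= a -> 0 <= b -> a ^ 2 <= b ^ 2 -> a <= b.
Proof.
  intros Ha Hb H. pose proof (sqrt_sq_le a b Hb H). rewrite Rabs_pos_eq in H0; lra.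
Qed.

Lemma norm_DT0inv c0v C0v v : 0 < c0v -> c0v <= C0v ->
  norm2 v / C0v <= norm2 (fst v / C0v, snd v / c0v).
Proof.
  intros H1 H2. apply le_of_sq.
  - apply Rdiv_le_0_compat; [apply norm2_nonneg| lra].
  - apply norm2_nonneg.
  - rewrite norm2_sq. cbn [fst snd]. unfold Rdiv. rewrite Rpow_mult_distr, norm2_sq.
    assert (/ C0v ^ 2 <= / c0v ^ 2) by (apply Rinv_le_contravar; [apply pow_lt; lra| apply pow_incr; lra]).
    rewrite !Rpow_mult_distr. pose proof (pow2_ge_0 (fst v)). pose proof (pow2_ge_0 (snd v)).
    assert (snd v ^ 2 * / C0v ^ 2 <= snd v ^ 2 * / c0v ^ 2) by (apply Rmult_le_compat_l; lra).
    replace ((/ C0v) ^ 2) with (/ C0v ^ 2) by (rewrite pow_inv; reflexivity).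
    replace ((/ c0v) ^ 2) with (/ c0v ^ 2) by (rewrite pow_inv; reflexivity).
    lra.
Qed.

Theorem lemma5p1 (h r0 a1 a2 rho0 beta : R)
  (Hh : 0 < h) (Hr0 : 0 < r0) (Ha : a1 > Rabs a2) (Hrho0 : 0 < rho0)
  (Hbeta0 : 0 < beta)
  (Hbeta1 : beta < (h ^ 2 + h * sqrt (h ^ 2 + r0 ^ 2))
                   / (r0 ^ 2 + h ^ 2 + h * sqrt (h ^ 2 + r0 ^ 2))) :
  forall k : nat, exists N0 : nat, forall n : nat, (n > N0)%nat ->
  forall P1 P2 : R * R,
    norm2 (fst P1 - fst P2, snd P1 - snd P2) = 4 * rho0 / INR n ->
    let rho := beta * rho0 / INR n in
    let x0 := DT0 h r0 (fst P1 - fst P2, snd P1 - snd P2) in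
    let E := Ham h r0 a1 a2 x0 in
    let CE := exp (2 * E / ((a1 + a2) * A_const h r0)) in
    CE < C_star h r0 a1 a2 /\
    (exists x : R -> R * R, is_ham_solution h r0 a1 a2 x /\ x 0 = x0) /\
    (forall x : R -> R * R, is_ham_solution h r0 a1 a2 x -> x 0 = x0 ->
       exists TE : R, 0 < TE /\ (forall t : R, x (t + TE) = x t) /\
         forall t : R, 0 <= t <= INR (S k) * TE ->
           norm2 (DT0inv h r0 (x t)) >= 4 * rho).
Proof.
  intros kn.
  pose proof PI_RGT_0 as HPI.
  assert (HS : 0 < sqrt (h ^ 2 + r0 ^ 2)) by (apply sqrt_lt_R0; nra).
  set (Sq := sqrt (h ^ 2 + r0 ^ 2)) in *.
  assert (HD : 0 < h ^ 2 + h * Sq) by nra.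
  assert (HA : 0 < A_const h r0).
  { unfold A_const. fold Sq. apply Rdiv_lt_0_compat; [nra|].
    apply Rmult_lt_0_compat; [|lra]. apply Rmult_lt_0_compat; [|lra]. apply Rmult_lt_0_compat; lra. }
  assert (Htau : 0 < tau h (r0 ^ 2)) by (unfold tau; apply exp_pos).
  assert (HB : 0 < B_const h r0).
  { unfold B_const. fold Sq. apply Rdiv_lt_0_compat; [nra|].
    apply Rmult_lt_0_compat; [|lra]. apply Rmult_lt_0_compat; [|lra]. apply Rmult_lt_0_compat; lra. }
  pose proof (Rabs_pos a2). pose proof (Rle_abs a2). pose proof (Rle_abs (- a2)).
  rewrite Rabs_Ropp in *.
  set (c := (a1 + a2) * A_const h r0).
  set (d := (a1 - a2) * B_const h r0).
  assert (Hc : 0 < c) by (unfold c; apply Rmult_lt_0_compat; lra).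
  assert (Hd : 0 < d) by (unfold d; apply Rmult_lt_0_compat; lra).
  assert (Hc0 : 0 < c0 h r0) by (unfold c0; exact Htau).
  assert (HC0e : C0 h r0 = c0 h r0 * (1 + r0 ^ 2 / (h ^ 2 + h * Sq))) by reflexivity.
  assert (Hr2 : 0 <= r0 ^ 2 / (h ^ 2 + h * Sq)) by (apply Rdiv_le_0_compat; nra).
  assert (Hc0C0 : c0 h r0 <= C0 h r0) by (rewrite HC0e; nra).
  assert (HC0 : 0 < C0 h r0) by lra.
  assert (HbC : beta * C0 h r0 < c0 h r0).
  { rewrite HC0e. fold Sq in Hbeta1.
    assert (beta * (r0 ^ 2 + h ^ 2 + h * Sq) < h ^ 2 + h * Sq).
    { apply (Rmult_lt_compat_r (r0 ^ 2 + h ^ 2 + h * Sq)) in Hbeta1; [|nra].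
      replace ((h ^ 2 + h * Sq) / (r0 ^ 2 + h ^ 2 + h * Sq) * (r0 ^ 2 + h ^ 2 + h * Sq))
        with (h ^ 2 + h * Sq) in Hbeta1 by (field; nra). lra. }
    replace (beta * (c0 h r0 * (1 + r0 ^ 2 / (h ^ 2 + h * Sq)))) with
      (c0 h r0 * (beta * (r0 ^ 2 + h ^ 2 + h * Sq) / (h ^ 2 + h * Sq))) by (field; lra).
    rewrite <- (Rmult_1_r (c0 h r0)) at 2. apply Rmult_lt_compat_l; [lra|].
    apply (Rmult_lt_reg_r (h ^ 2 + h * Sq)); [lra|]. unfold Rdiv.
    rewrite Rmult_assoc, Rinv_l, Rmult_1_r by lra. lra. }
  set (gam := beta * C0 h r0 / c0 h r0).
  assert (Hgam : 0 < gam < 1).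
  { unfold gam. split. apply Rdiv_lt_0_compat; nra.
    apply (Rmult_lt_reg_r (c0 h r0)); [lra|]. unfold Rdiv. rewrite Rmult_assoc, Rinv_l, Rmult_1_r by lra. lra. }
  set (L := - ln gam).
  assert (HL : 0 < L).
  { unfold L. assert (ln gam < ln 1) by (apply ln_increasing; lra). rewrite ln_1 in H2. lra. }
  set (U0 := Rmin (1/10) (L/10)).
  assert (HU0 : 0 < U0) by (unfold U0; apply Rmin_pos; lra).
  set (kk := d / c).
  assert (Hkk : 0 < kk) by (unfold kk; apply Rdiv_lt_0_compat; lra).
  destruct (INR_unbounded (4 * rho0 * kk * C0 h r0 / U0)) as [N0 HN0].
  exists N0. intros n Hn P1 P2 Hnorm rho x0 E CE.
  assert (HnN : INR n > INR N0) by (apply lt_INR; lia).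
  assert (Hpos : 0 <= 4 * rho0 * kk * C0 h r0 / U0).
  { apply Rdiv_le_0_compat; [|lra]. apply Rmult_le_pos; [|lra]. apply Rmult_le_pos; [|lra]. apply Rmult_le_pos; lra. }
  assert (Hn0 : 0 < INR n) by lra.
  set (delta := 4 * rho0 / INR n) in *.
  assert (Hdelta : 0 < delta) by (unfold delta; apply Rdiv_lt_0_compat; lra).
  set (U := kk * C0 h r0 * delta).
  assert (HU : U < U0).
  { unfold U, delta. 
    assert (4 * rho0 * kk * C0 h r0 < U0 * INR n).
    { apply (Rmult_lt_compat_r U0) in HN0; [|lra].
      replace (4 * rho0 * kk * C0 h r0 / U0 * U0) with (4 * rho0 * kk * C0 h r0) in HN0 by (field; lra).
      assert (U0 * INR N0 < U0 * INR n) by (apply Rmult_lt_compat_l; lra). lra. }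
    apply (Rmult_lt_reg_r (INR n)); [lra|].
    replace (kk * C0 h r0 * (4 * rho0 / INR n) * INR n) with (4 * rho0 * kk * C0 h r0) by (field; lra).
    lra. }
  assert (HU1 : U < 1/10) by (pose proof (Rmin_l (1/10) (L/10)); fold U0 in H2; lra).
  assert (HUL : 10 * U < L) by (pose proof (Rmin_r (1/10) (L/10)); fold U0 in H2; lra).
  assert (HU0' : 0 < U) by (unfold U; apply Rmult_lt_0_compat; [apply Rmult_lt_0_compat|]; lra).
  assert (Hx0e : x0 = (C0 h r0 * (fst P1 - fst P2), c0 h r0 * (snd P1 - snd P2))) by reflexivity.
  set (v1 := fst P1 - fst P2) in *. set (v2 := snd P1 - snd P2) in *.
  assert (Hv : v1 ^ 2 + v2 ^ 2 = delta ^ 2) by (rewrite <- Hnorm, norm2_sq; reflexivity).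
  set (r := norm2 x0).
  assert (Hrsq : r ^ 2 = (C0 h r0 * v1) ^ 2 + (c0 h r0 * v2) ^ 2) by (unfold r; rewrite norm2_sq, Hx0e; reflexivity).
  assert (Hrnn : 0 <= r) by apply norm2_nonneg.
  assert (Hcc : c0 h r0 ^ 2 <= C0 h r0 ^ 2) by (apply pow_incr; lra).
  assert (Hrup : r <= C0 h r0 * delta).
  { apply le_of_sq; [lra| apply Rmult_le_pos; lra|].
    rewrite Hrsq, !Rpow_mult_distr, <- Hv.
    pose proof (pow2_ge_0 v1). pose proof (pow2_ge_0 v2).
    assert (c0 h r0 ^ 2 * v2 ^ 2 <= C0 h r0 ^ 2 * v2 ^ 2) by (apply Rmult_le_compat_r; lra). lra. }
  assert (Hrlo : c0 h r0 * delta <= r).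
  { apply le_of_sq; [apply Rmult_le_pos; lra| lra|].
    rewrite Hrsq, !Rpow_mult_distr, <- Hv.
    pose proof (pow2_ge_0 v1). pose proof (pow2_ge_0 v2).
    assert (c0 h r0 ^ 2 * v1 ^ 2 <= C0 h r0 ^ 2 * v1 ^ 2) by (apply Rmult_le_compat_r; lra). lra. }
  assert (Hrpos : 0 < r) by (pose proof (Rmult_lt_0_compat _ _ Hc0 Hdelta); lra).
  assert (Hx0nz : x0 <> (0, 0)).
  { intros Z. unfold r in Hrpos. rewrite Z in Hrpos. unfold norm2 in Hrpos. cbn [fst snd] in Hrpos.
    replace (0 ^ 2 + 0 ^ 2) with 0 in Hrpos by ring. rewrite sqrt_0 in Hrpos. lra. }
  set (u := kk * r).
  assert (Hu : 0 < u <= U).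
  { unfold u, U. split. apply Rmult_lt_0_compat; lra.
    rewrite Rmult_assoc. apply Rmult_le_compat_l; lra. }
  assert (Hfx := fst_le_norm x0). fold r in Hfx. apply Rabs_le_between in Hfx.
  assert (Hkf : - u <= kk * fst x0 <= u).
  { unfold u. destruct Hfx as [Hf1 Hf2]. split.
    - replace (- (kk * r)) with (kk * (- r)) by ring. apply Rmult_le_compat_l; lra.
    - apply Rmult_le_compat_l; lra. }
  set (s := exp (ln r - kk * fst x0)).
  assert (Hs : 0 < s) by apply exp_pos.
  assert (Hsln : ln s = ln r - kk * fst x0) by (unfold s; apply ln_exp).
  assert (Hse : s = r * exp (- (kk * fst x0))).
  { unfold s. unfold Rminus. rewrite exp_plus, exp_ln by lra. reflexivity. }
  pose proof (exp_le_3) as He3. pose proof (exp_pos 1) as He0.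
  assert (Heu : exp u <= 3).
  { apply Rle_trans with (exp 1); [|exact He3]. destruct (Rlt_dec u 1); [left; apply exp_increasing; lra| lra]. }
  assert (Hsup : s <= r * exp u).
  { rewrite Hse. apply Rmult_le_compat_l; [lra|].
    destruct (Req_dec (- (kk * fst x0)) u) as [Z|Z]; [rewrite Z; lra| left; apply exp_increasing; lra]. }
  assert (Hslo : r * exp (- u) <= s).
  { rewrite Hse. apply Rmult_le_compat_l; [lra|].
    destruct (Req_dec (- (kk * fst x0)) (- u)) as [Z|Z]; [rewrite Z; lra| left; apply exp_increasing; lra]. }
  assert (Hkse : kk * s * exp 1 <= 9 * u).
  { apply Rle_trans with (kk * (r * exp u) * exp 1).
    { apply Rmult_le_compat_r; [lra|]. apply Rmult_le_compat_l; lra. }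
    replace (kk * (r * exp u) * exp 1) with (u * (exp u * exp 1)) by (unfold u; ring).
    replace (9 * u) with (u * (3 * 3)) by ring.
    apply Rmult_le_compat_l; [lra|]. apply Rmult_le_compat; try lra. left; apply exp_pos. }
  assert (Hkse1 : kk * s * exp 1 < 1) by lra.
  assert (Hkr : kk * r <= 1 / 2) by (fold u; lra).
  destruct (construct c d s x0 Hc Hd Hs Hkse1 Hx0nz Hkr ltac:(rewrite Hsln; reflexivity)) as [x [P [Hsol [Hxx0 [HP [Hper Hlow]]]]]].
  assert (Hdc : 0 < c / d) by (apply Rdiv_lt_0_compat; lra).
  assert (Hscd : s < c / d / exp 1).
  { unfold kk in Hkse1. apply (Rmult_lt_reg_r (d / c * exp 1)).
    apply Rmult_lt_0_compat; [apply Rdiv_lt_0_compat|]; lra.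
    replace (c / d / exp 1 * (d / c * exp 1)) with 1 by (field; repeat split; lra). lra. }
  assert (Hkey : beta * C0 h r0 * delta <= s * exp (- (kk * s * exp 1))).
  { assert (K1 : exp (- (9 * u)) <= exp (- (kk * s * exp 1))).
    { destruct (Req_dec (kk * s * exp 1) (9 * u)) as [Z|Z]; [rewrite Z; lra| left; apply exp_increasing; lra]. }
    assert (K2 : r * exp (- u) * exp (- (9 * u)) <= s * exp (- (kk * s * exp 1))).
    { apply Rmult_le_compat; try lra. apply Rmult_le_pos; [lra| left; apply exp_pos]. left; apply exp_pos. }
    rewrite Rmult_assoc, <- exp_plus in K2.
    replace (- u + - (9 * u)) with (- (10 * u)) in K2 by ring.
    assert (K3 : exp (- L) < exp (- (10 * u))) by (apply exp_increasing; lra).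
    unfold L in K3. rewrite Ropp_involutive, exp_ln in K3 by lra.
    assert (K4 : c0 h r0 * delta * gam <= r * exp (- (10 * u))).
    { apply Rmult_le_compat; try lra. apply Rmult_le_pos; lra. }
    replace (c0 h r0 * delta * gam) with (beta * C0 h r0 * delta) in K4 by (unfold gam; field; lra).
    lra. }
  split; [|split].
  - assert (HE : 2 * E / c = ln s + ln s).
    { rewrite Hsln. unfold E, Ham. fold c d r. unfold kk. field. lra. }
    unfold CE. fold c. rewrite HE, exp_plus, exp_ln by lra.
    unfold C_star. replace (2 * a_prime h r0 a1 a2) with (c / d).
    2: { unfold a_prime. fold c. unfold d. field. split; lra. }
    assert (0 < c / d / exp 1) by (apply Rdiv_lt_0_compat; lra).
    simpl. rewrite Rmult_1_r. apply Rmult_le_0_lt_compat; lra.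
  - exists x. split; [exact Hsol| exact Hxx0].
  - intros y Hy Hy0.
    set (m := Rmin (Rmin (c / d) (s / exp 1)) (s * exp (- (kk * s * exp 1)))).
    assert (Hm : 0 < m).
    { unfold m. apply Rmin_pos; [apply Rmin_pos|]. lra. apply Rdiv_lt_0_compat; lra.
      apply Rmult_lt_0_compat; [lra| apply exp_pos]. }
    assert (Heq : forall t, y t = x t).
    { apply (uniqueness c d y x m Hc Hm Hy Hsol).
      - intros t. apply Rle_trans with (Rmin (c / d) (s / exp 1)); [apply Rmin_l|].
        apply (sol_lower c d s y Hc Hd Hs Hy). rewrite Hy0. rewrite Hsln. reflexivity.
      - intros t. apply Rle_trans with (s * exp (- (kk * s * exp 1))); [apply Rmin_r|]. apply Hlow.
      - rewrite Hy0, Hxx0. reflexivity. }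
    exists P. split; [exact HP| split].
    + intros t. rewrite !Heq. apply Hper.
    + intros t _. rewrite Heq. unfold DT0inv.
      pose proof (norm_DT0inv (c0 h r0) (C0 h r0) (x t) Hc0 Hc0C0) as HN.
      pose proof (Hlow t) as Hl.
      assert (Hrho : 4 * rho = beta * delta) by (unfold rho, delta; field; lra).
      rewrite Hrho. apply Rle_ge. apply Rle_trans with (norm2 (x t) / C0 h r0); [|exact HN].
      apply (Rmult_le_reg_r (C0 h r0)); [lra|]. replace (norm2 (x t) / C0 h r0 * C0 h r0) with (norm2 (x t)) by (field; lra).
      fold kk in Hl. nra.
Qed.
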